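(* Let $\mathfrak{A}_q$ be a quantum cluster algebra with quantum seed $(\mathbf{x},B,\Lambda)$, $\mathbf{x}=(x_1,\ldots,x_n)$, assume that all prime ideals of $\mathfrak{A}_q$ are completely prime, and assume that the cluster $\mathbf{x}$ is super-toric. Let $\mathcal{I}$ be a torus invariant non-zero proper prime ideal of $\mathfrak{A}_q$ such that $\mathcal{I}\cap\mathbf{x}=\{x_{k+1},\ldots,x_n\}$. Then $\mathcal{I}\cap\mathbb{C}_\Lambda[x_1,\ldots,x_n]$ is generated by $\{x_{k+1},\ldots,x_n\}$.
   Context: A compatible pair $(B,\Lambda)$ consists of an $m\times n$ integer matrix $B$ ($m\le n$) with skew-symmetrizable principal $m\times m$ part and a skew-symmetric $n\times n$ integer matrix $\Lambda=(\lambda_{ij})$ such that $B\Lambda$ has entries $d_i\delta_{ij}$ with $d_i$ positive integers. In the quantum cluster algebra, the seed variables generate the quantum affine space $\mathbb{C}_\Lambda[x_1,\ldots,x_n]$ with relations $x_ix_j=q^{\lambda_{ij}}x_jx_i$, and $\mathfrak{A}_q\subset\mathbb{C}_\Lambda[x_1^{\pm1},\ldots,x_n^{\pm1}]$. Torus action: with $T=\ker(B)\subset\mathbb{Z}^n$, each $\mathbf{b}\in T$ and $\alpha\in\mathbb{C}^*$ give the global toric action $x_i\mapsto\alpha^{b_i}x_i$, acting on $\mathfrak{A}_q$ by automorphisms; torus invariant means stable under all of these. Super-toric: for $1\le k\le n$ let $T_{[1,k]}\subset\mathbb{Z}^k$ be the projection of $T$ onto the first $k$ coordinates and $\Lambda_{[1,k]}$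 the principal $k\times k$ submatrix of $\Lambda$; the cluster is super-toric if $\mathrm{rk}(T_{[1,k]}+\mathrm{Im}(\Lambda_{[1,k]}))=k$ for all $k=1,\ldots,n$. Completely prime: $ab\in\mathcal{I}\Rightarrow a\in\mathcal{I}$ or $b\in\mathcal{I}$. *)

(* Defs.v *)
From HB Require Import structures.
From mathcomp Require Import all_boot all_order all_algebra.
From mathcomp Require Import Rstruct complex.
From mathcomp Require Import boolp classical_sets cardinality fsbigop.
From Stdlib Require Reals.

Set Implicit Arguments.
Unset Strict Implicit.
Unset Printing Implicit Defensive.
Import Order.TTheory GRing.Theory Num.Theory.
Local Open Scope classical_set_scope.
Local Open Scope ring_scope.

Definition CC : numClosedFieldType := (Rdefinitions.R)[i].

(** Exponent vectors in Z^N and (possibly infinite) coefficient functions.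
    An element of the quantum torus is a finitely supported function
    Z^N -> C, c |-> coefficient of X^c. *)
Definition expo (N : nat) := 'rV[int]_N.
Definition qfun (N : nat) := expo N -> CC.

Definition fin_supp N (f : qfun N) : Prop := finite_set [set c | f c != 0].

Definition lam N (L : 'M[int]_N) (a b : expo N) : int := (a *m L *m b^T) 0 0.

Definition qadd N (f g : qfun N) : qfun N := fun c => f c + g c.
Definition qscale N (z : CC) (f : qfun N) : qfun N := fun c => z * f c.
Definition qzero N : qfun N := fun _ => 0.
Arguments qzero : clear implicits.
Definition qmono N (a : expo N) : qfun N := fun c => if c == a then 1 else 0.
Definition qone N : qfun N := qmono 0.
Arguments qone : clear implicits.
Definition qconst N (z : CC) : qfun N := qscale z (qone N).
Arguments qconst : clear implicits.

(** Multiplication of the based quantum torus C_Lambda[X^{+-1}]: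
    X^a X^b = (q^{1/2})^{Lambda(a,b)} X^{a+b}, where qh = q^{1/2}.
    In particular x_i x_j = q^{lambda_ij} x_j x_i for x_i = X^{e_i}. *)
Definition qmul N (qh : CC) (L : 'M[int]_N) (f g : qfun N) : qfun N :=
  fun c => \sum_(a \in [set: expo N]) (f a * g (c - a) * qh ^ (lam L a (c - a))).

Definition qpow N qh (L : 'M[int]_N) (f : qfun N) (k : nat) : qfun N :=
  iter k (qmul qh L f) (qone N).

Definition evec N (i : 'I_N) : expo N := \row_j (i == j)%:Z.

Definition is_subalg N qh (L0 : 'M[int]_N) (S : set (qfun N)) : Prop :=
  (forall z, S (qconst N z)) /\
  (forall f g, S f -> S g -> S (qadd f g)) /\
  (forall f g, S f -> S g -> S (qmul qh L0 f g)).

Definition subalg_gen N qh (L0 : 'M[int]_N) (G : set (qfun N)) : set (qfun N) :=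
  [set f | forall S, is_subalg qh L0 S -> G `<=` S -> S f].

Definition is_ideal N qh (L0 : 'M[int]_N) (A I : set (qfun N)) : Prop :=
  I `<=` A /\ I (qzero N) /\
  (forall f g, I f -> I g -> I (qadd f g)) /\
  (forall a f, A a -> I f -> I (qmul qh L0 a f) /\ I (qmul qh L0 f a)).

Definition ideal_gen N qh (L0 : 'M[int]_N) (A G : set (qfun N)) : set (qfun N) :=
  [set f | forall J, is_ideal qh L0 A J -> G `<=` J -> J f].

Definition is_prime_ideal N qh (L0 : 'M[int]_N) (A I : set (qfun N)) : Prop :=
  is_ideal qh L0 A I /\ I <> A /\
  (forall J K, is_ideal qh L0 A J -> is_ideal qh L0 A K ->
     (forall a b, J a -> K b -> I (qmul qh L0 a b)) -> J `<=` I \/ K `<=` I).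

Definition is_completely_prime N qh (L0 : 'M[int]_N) (A I : set (qfun N)) : Prop :=
  is_ideal qh L0 A I /\ I <> A /\
  (forall a b, A a -> A b -> I (qmul qh L0 a b) -> I a \/ I b).

Definition skew_symmetric N (L : 'M[int]_N) : Prop := L^T = - L.

Definition principal_skew_symmetrizable m p (B : 'M[int]_(m, m + p)) : Prop :=
  exists D : 'I_m -> int, (forall i, 0 < D i) /\
    forall i j : 'I_m, D i * B i (lshift p j) = - (D j * B j (lshift p i)).

Definition compatible_pair m p (B : 'M[int]_(m, m + p)) (L : 'M[int]_(m + p)) : Prop :=
  principal_skew_symmetrizable B /\ skew_symmetric L /\
  exists d : 'I_m -> int, (forall i, 0 < d i) /\
    forall (i : 'I_m) (j : 'I_(m + p)),
      (B *m L) i j = if j == lshift p i then d i else 0.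

Record qseed (m p : nat) := QSeed {
  sX : 'I_(m + p) -> qfun (m + p);
  sB : 'M[int]_(m, m + p);
  sL : 'M[int]_(m + p) }.

Definition posp (z : int) : int := Num.max z 0.

(** E-matrix of Berenstein-Zelevinsky (transposed convention: our B is the
    transpose of their tilde-B). *)
Definition mutE m p (B : 'M[int]_(m, m + p)) (k : 'I_m) : 'M[int]_(m + p) :=
  \matrix_(i, j) if j == lshift p k then
                   (if i == lshift p k then -1 else posp (- B k i))
                 else (i == j)%:Z.

Definition mutL m p (B : 'M[int]_(m, m + p)) (L : 'M[int]_(m + p)) (k : 'I_m) :=
  (mutE B k)^T *m L *m mutE B k.

Definition mutB m p (B : 'M[int]_(m, m + p)) (k : 'I_m) : 'M[int]_(m, m + p) :=
  \matrix_(i, j) if (i == k) || (j == lshift p k) then - B i j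
                 else B i j + Num.sg (B k j) * posp (B i (lshift p k) * B k j).

(** toric-frame monomial M(v), v in N^N, of a seed with cluster X and
    matrix L:  M(v) = q^{-1/2 sum_{i<j} v_i v_j lambda_ij} X_1^{v_1}...X_N^{v_N}
    (ordered product), computed in the initial quantum torus (qh, L0). *)
Definition seed_mono N qh (L0 : 'M[int]_N) (X : 'I_N -> qfun N)
    (L : 'M[int]_N) (v : expo N) : qfun N :=
  qscale (qh ^ (- \sum_(i < N) \sum_(j < N | (i < j)%N) v 0 i * v 0 j * L i j))
    (foldr (fun i acc => qmul qh L0 (qpow qh L0 (X i) (absz (v 0 i))) acc)
           (qone N) (enum 'I_N)).

(** The new cluster
    variable X'_k is characterised (as an element of the initial quantum
    torus, which contains it by the quantum Laurent phenomenon; it is unique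
    since the torus is a domain) by the quantum exchange relation
      X'_k X_k = q^{Lambda(v+,e_k)/2} M(v+) + q^{Lambda(v-,e_k)/2} M(v-),
    which is equivalent to the BZ formula X'_k = M(-e_k+v+) + M(-e_k+v-). *)
Definition mutation m p (qh : CC) (L0 : 'M[int]_(m + p))
    (S : qseed m p) (k : 'I_m) (S' : qseed m p) : Prop :=
  let kk := lshift p k in
  let vp : expo (m + p) := \row_j posp (sB S k j) in
  let vm : expo (m + p) := \row_j posp (- sB S k j) in
  sB S' = mutB (sB S) k /\ sL S' = mutL (sB S) (sL S) k /\
  (forall i, i != kk -> sX S' i = sX S i) /\
  fin_supp (sX S' kk) /\
  qmul qh L0 (sX S' kk) (sX S kk) =
    qadd (qscale (qh ^ lam (sL S) vp (evec kk)) (seed_mono qh L0 (sX S) (sL S) vp))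
         (qscale (qh ^ lam (sL S) vm (evec kk)) (seed_mono qh L0 (sX S) (sL S) vm)).

Inductive reachable m p (qh : CC) (L0 : 'M[int]_(m + p)) (S0 : qseed m p) :
    qseed m p -> Prop :=
  | reach_refl : reachable qh L0 S0 S0
  | reach_step S k S' : reachable qh L0 S0 S -> mutation qh L0 S k S' ->
      reachable qh L0 S0 S'.

Definition init_seed m p (B : 'M[int]_(m, m + p)) (L : 'M[int]_(m + p)) : qseed m p :=
  QSeed (fun i => qmono (evec i)) B L.

Definition cluster_vars m p qh (B : 'M[int]_(m, m + p)) (L : 'M[int]_(m + p)) :
    set (qfun (m + p)) :=
  [set f | exists S, reachable qh L (init_seed B L) S /\ exists i, f = sX S i].

(** the quantum cluster algebra A_q (frozen variables not inverted) *)
Definition qcluster_alg m p qh (B : 'M[int]_(m, m + p)) (L : 'M[int]_(m + p)) :=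
  subalg_gen qh L (cluster_vars qh B L).

Definition qaffine N qh (L : 'M[int]_N) :=
  subalg_gen qh L [set f | exists i, f = qmono (evec i)].

Definition toric_act N (b : expo N) (al : CC) (f : qfun N) : qfun N :=
  fun c => al ^ ((c *m b^T) 0 0) * f c.

Definition torus_invariant m p (B : 'M[int]_(m, m + p)) (I : set (qfun (m + p))) :=
  forall (b : expo (m + p)) (al : CC), B *m b^T = 0 -> al != 0 ->
    forall f, I f -> I (toric_act b al f).

Definition ncoord N (b : expo N) (i : nat) : int :=
  if insub i is Some j then b 0 j else 0.
Definition nentry N (L : 'M[int]_N) (i j : nat) : int :=
  if insub i is Some i' then (if insub j is Some j' then L i' j' else 0) else 0.

Definition TplusIm m p (B : 'M[int]_(m, m + p)) (L : 'M[int]_(m + p)) (k : nat)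
    (w : 'rV[int]_k) : Prop :=
  exists (b : expo (m + p)) (c : 'rV[int]_k), B *m b^T = 0 /\
    forall i : 'I_k, w 0 i = ncoord b i + \sum_(j < k) nentry L i j * c 0 j.

(** rk(T_[1,k] + Im Lambda_[1,k]) = k for all k = 1..n: the subgroup contains
    k Z-linearly independent vectors (rows of a nonsingular matrix). *)
Definition super_toric m p (B : 'M[int]_(m, m + p)) (L : 'M[int]_(m + p)) : Prop :=
  forall k : nat, (1 <= k <= m + p)%N ->
    exists M : 'M[int]_k, \det M != 0 /\ forall r : 'I_k, TplusIm B L (row r M).

(* Main.v *)
Require Import Defs.
From HB Require Import structures.
From mathcomp Require Import all_boot all_order all_algebra.
From mathcomp Require Import Rstruct complex.
From mathcomp Require Import boolp classical_sets cardinality fsbigop.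
From mathcomp Require Import ring zify.
Import Order.TTheory GRing.Theory Num.Theory.
Local Open Scope classical_set_scope.
Local Open Scope ring_scope.
Set Implicit Arguments.
Unset Strict Implicit.
Unset Printing Implicit Defensive.


Lemma sum_single N (F : expo N -> CC) x :
  (forall y, y != x -> F y = 0) -> \sum_(a \in [set: expo N]) F a = F x.
Proof.
move=> F0; rewrite -(fsbig_widen [set x] setT F) //; first by rewrite fsbig_set1.
by move=> y [_ /= ynx]; apply: F0; apply/eqP.
Qed.

Lemma qmul_monoL N qh (L : 'M[int]_N) u (g : qfun N) c :
  qmul qh L (qmono u) g c = g (c - u) * qh ^ lam L u (c - u).
Proof.
rewrite /qmul (@sum_single _ _ u) /qmono ?eqxx ?mul1r //.
by move=> y /negbTE ->; rewrite !mul0r.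
Qed.

Lemma qmul_monoR N qh (L : 'M[int]_N) v (g : qfun N) c :
  qmul qh L g (qmono v) c = g (c - v) * qh ^ lam L (c - v) v.
Proof.
rewrite /qmul (@sum_single _ _ (c - v)) /qmono.
  by rewrite subKr eqxx mulr1.
move=> y yn; case: eqP => [e|]; last by rewrite mulr0 mul0r.
by case/eqP: yn; rewrite -e subKr.
Qed.

Lemma lam0l N (L : 'M[int]_N) x : lam L 0 x = 0.
Proof. by rewrite /lam !mul0mx mxE. Qed.
Lemma lam0r N (L : 'M[int]_N) x : lam L x 0 = 0.
Proof. by rewrite /lam trmx0 mulmx0 mxE. Qed.
Lemma lamDl N (L : 'M[int]_N) x y z : lam L (x + y) z = lam L x z + lam L y z.
Proof. by rewrite /lam !mulmxDl mxE. Qed.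
Lemma lamDr N (L : 'M[int]_N) x y z : lam L z (x + y) = lam L z x + lam L z y.
Proof. by rewrite /lam linearD /= mulmxDr mxE. Qed.
Lemma lamNl N (L : 'M[int]_N) x z : lam L (- x) z = - lam L x z.
Proof. by rewrite /lam !mulNmx mxE. Qed.
Lemma lamNr N (L : 'M[int]_N) x z : lam L z (- x) = - lam L z x.
Proof. by rewrite /lam linearN /= mulmxN mxE. Qed.
Lemma lam_skew N (L : 'M[int]_N) x y : L^T = - L -> lam L y x = - lam L x y.
Proof.
move=> sk; rewrite /lam.
have tr : forall M : 'M[int]_1, M 0 0 = (M^T) 0 0 by move=> M; rewrite mxE.
by rewrite [LHS]tr !trmx_mul trmxK sk mulNmx mulmxN mxE mulmxA.
Qed.

Lemma qmul_const N qh (L : 'M[int]_N) z g : qmul qh L (qconst N z) g = qscale z g.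
Proof.
apply/funext => c; rewrite /qconst /qscale /qmul (@sum_single _ _ 0) /qone /qmono.
  by rewrite eqxx subr0 lam0l expr0z mulr1 mulr1.
by move=> y /negbTE ->; rewrite mulr0 !mul0r.
Qed.

Lemma qmono_mul N qh (L : 'M[int]_N) a b :
  qmul qh L (qmono a) (qmono b) = qscale (qh ^ lam L a b) (qmono (a + b)).
Proof.
apply/funext => c; rewrite qmul_monoL /qscale /qmono.
have -> : (c - a == b) = (c == a + b).
  by apply/eqP/eqP => [<-|->]; [rewrite subrKC | rewrite [a + b]addrC addrK].
by case: eqP => [->|]; rewrite ?mul1r ?mulr1 ?mul0r ?mulr0 // [a + b]addrC addrK.
Qed.

Lemma qmul_one N qh (L : 'M[int]_N) f : qmul qh L f (qone N) = f.
Proof. by apply/funext => c; rewrite qmul_monoR subr0 lam0r expr0z mulr1. Qed.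

Lemma qscaleA N z z' (f : qfun N) : qscale z (qscale z' f) = qscale (z * z') f.
Proof. by apply/funext => c; rewrite /qscale mulrA. Qed.
Lemma qscale1 N (f : qfun N) : qscale 1 f = f.
Proof. by apply/funext => c; rewrite /qscale mul1r. Qed.
Lemma qscale0 N (f : qfun N) : qscale 0 f = qzero N.
Proof. by apply/funext => c; rewrite /qscale mul0r. Qed.

Lemma expz_inv (qh : CC) z : qh != 0 -> qh ^ (- z) * qh ^ z = 1.
Proof. by move=> nz; rewrite -expfzDr // addNr expr0z. Qed.

Definition nonneg N (a : expo N) := forall i, 0 <= a 0 i.
Definition isum N (a : expo N) := \sum_(i < N) a 0 i.

Lemma subalg_gen_is N qh (L : 'M[int]_N) G : is_subalg qh L (subalg_gen qh L G).
Proof.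
split; [|split].
- by move=> z S [HS _] _.
- by move=> f g Hf Hg S HS HG; apply: HS.2.1; [apply: Hf | apply: Hg].
- by move=> f g Hf Hg S HS HG; apply: HS.2.2; [apply: Hf | apply: Hg].
Qed.

Lemma subalg_gen_sub N qh (L : 'M[int]_N) G : G `<=` subalg_gen qh L G.
Proof. by move=> f Gf S _ HG; apply: HG. Qed.

Lemma subalg_scale N qh (L : 'M[int]_N) S z f :
  is_subalg qh L S -> S f -> S (qscale z f).
Proof. by move=> [H1 [_ H3]] Sf; rewrite -(qmul_const qh L); apply: H3. Qed.

Lemma evecE N (j i : 'I_N) : evec j 0 i = (j == i)%:Z.
Proof. by rewrite mxE. Qed.

Lemma evec_sum N (j : 'I_N) : isum (evec j) = 1.
Proof.
rewrite /isum (bigD1 j) //= big1 => [|i nij]; first by rewrite evecE eqxx addr0.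
by rewrite evecE eq_sym (negbTE nij).
Qed.

Lemma mono_factor N qh (L : 'M[int]_N) a e : qh != 0 ->
  qmono a = qscale (qh ^ (- lam L (a - e) e)) (qmul qh L (qmono (a - e)) (qmono e)).
Proof. by move=> nz; rewrite qmono_mul qscaleA expz_inv // qscale1 subrK. Qed.

Lemma nonneg0 N (a : expo N) : nonneg a -> isum a = 0 -> a = 0.
Proof.
move=> nn s0; apply/matrixP => i j; rewrite ord1 mxE.
by move/psumr_eq0P: s0 => ->.
Qed.

Lemma mono_in_subalg N qh (L : 'M[int]_N) S : qh != 0 -> is_subalg qh L S ->
  (forall i, S (qmono (evec i))) -> forall a, nonneg a -> S (qmono a).
Proof.
move=> nz HS Hg a nn.
suff: forall n a, nonneg a -> isum a = n%:Z -> S (qmono a).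
  move/(_ (absz (isum a)) a nn); apply.
  by rewrite gez0_abs // /isum sumr_ge0.
move=> n {a nn}; elim: n => [|n IH] a nn sa.
  rewrite (nonneg0 nn sa) -[qmono 0]qscale1 -/(qone N) -/(qconst N 1).
  exact: HS.1.
have [j aj] : exists j, a 0 j != 0.
  apply/not_existsP => H; move: sa; rewrite /isum big1 => [//|i _].
  by move: (H i); move/negP; rewrite negbK => /eqP.
have aj1 : 0 < a 0 j by rewrite lt_def aj nn.
rewrite (mono_factor L a (evec j) nz); apply: (subalg_scale _ HS).
apply: HS.2.2 => //; apply: IH.
  move=> i; rewrite !mxE; case: eqP => [<-|_]; last by rewrite subr0 nn.
  by rewrite subr_ge0.
rewrite /isum; under eq_bigr do rewrite !mxE.
rewrite big_split /= sumrN.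
have -> : \sum_(i < N) (j == i)%:Z = isum (evec j) by apply: eq_bigr => i _; rewrite mxE.
by rewrite -/(isum a) sa evec_sum; lia.
Qed.

Definition FS N (P : expo N -> Prop) (f : qfun N) :=
  exists s : seq (expo N), forall c, f c != 0 -> c \in s /\ P c.

Lemma qmul_supp N qh (L : 'M[int]_N) f g c :
  qmul qh L f g c != 0 -> exists a, f a != 0 /\ g (c - a) != 0.
Proof.
move=> H.
have [a _] := @fsbigN1 _ _ _ unit _ _
  (fun _ a => f a * g (c - a) * qh ^ lam L a (c - a)) tt H.
rewrite !mulf_eq0 !negb_or => /andP[/andP[fa ga] _].
by exists a.
Qed.

Lemma FS_subalg N qh (L : 'M[int]_N) : is_subalg qh L (FS (@nonneg N)).
Proof.
split; [|split].
- move=> z; exists [:: 0] => c; rewrite /qconst /qscale /qone /qmono.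
  case: (c =P 0) => [->|_]; last by rewrite mulr0 eqxx.
  by move=> _; split; [rewrite inE | move=> i; rewrite mxE].
- move=> f g [s1 H1] [s2 H2]; exists (s1 ++ s2) => c; rewrite /qadd => H.
  have [fc|fc] := eqVneq (f c) 0.
    move: H; rewrite fc add0r => /H2 [c2 P2]; by rewrite mem_cat c2 orbT.
  by have [c1 P1] := H1 c fc; rewrite mem_cat c1.
- move=> f g [s1 H1] [s2 H2]; exists [seq x + y | x <- s1, y <- s2] => c.
  move/qmul_supp => [a [fa ga]].
  have [a1 Pa] := H1 a fa; have [a2 Pb] := H2 _ ga.
  rewrite -(subrKC a c); split; first exact: allpairs_f.
  by move=> i; rewrite mxE addr_ge0.
Qed.

Lemma qaffine_FS N qh (L : 'M[int]_N) f : qaffine qh L f -> FS (@nonneg N) f.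
Proof.
move=> Hf; apply: Hf; first exact: FS_subalg.
move=> g [i ->]; exists [:: evec i] => c; rewrite /qmono.
case: (c =P evec i) => [->|_]; last by rewrite eqxx.
by move=> _; split; [rewrite inE | move=> j; rewrite mxE].
Qed.

Lemma FS_in N (J : set (qfun N)) (P : expo N -> Prop) :
  J (qzero N) -> (forall f g, J f -> J g -> J (qadd f g)) ->
  (forall z f, J f -> J (qscale z f)) -> (forall a, P a -> J (qmono a)) ->
  forall f, FS P f -> J f.
Proof.
move=> J0 JD JZ JP f [s]; elim: s f => [|a s IH] f Hf.
  have -> : f = qzero N.
    by apply/funext => c; apply/eqP/negPn/negP => /Hf [].
  exact: J0.
pose f' : qfun N := fun c => if c == a then 0 else f c.
have Hf' : forall c, f' c != 0 -> c \in s /\ P c.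
  move=> c; rewrite /f'; case: (c =P a) => [_|/eqP nca]; first by rewrite eqxx.
  by move/Hf => [cs Pc]; split => //; move: cs; rewrite inE (negbTE nca).
have -> : f = qadd (qscale (f a) (qmono a)) f'.
  apply/funext => c; rewrite /qadd /qscale /qmono /f'.
  by case: (c =P a) => [->|]; rewrite ?mulr1 ?addr0 ?mulr0 ?add0r.
apply: JD; last exact: IH.
have [fa|fa] := eqVneq (f a) 0; first by rewrite fa qscale0.
by apply: JZ; apply: JP; have [] := Hf a fa.
Qed.

Lemma sum_widen (F : nat -> int) k N : (k <= N)%N -> (forall j, (k <= j)%N -> F j = 0) ->
  \sum_(j < N) F j = \sum_(j < k) F j.
Proof.
move=> kN F0; rewrite (big_ord_widen N F kN) [in RHS]big_mkcond /=.
by apply: eq_bigr => i _; case: ifP => // /negbT; rewrite -leqNgt => /F0 ->.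
Qed.

Lemma ncoordE N (x : expo N) (j : 'I_N) : ncoord x j = x 0 j.
Proof. by rewrite /ncoord valK. Qed.

Lemma nentryE N (L : 'M[int]_N) (i j : 'I_N) : nentry L i j = L i j.
Proof. by rewrite /nentry !valK. Qed.

Lemma ncoordB N (x y : expo N) i : ncoord (x - y) i = ncoord x i - ncoord y i.
Proof. by rewrite /ncoord; case: insubP => [j _ _|_]; rewrite ?mxE ?subr0. Qed.

Definition G N k (a : expo N) := nonneg a /\ forall i : 'I_N, (k <= i)%N -> a 0 i = 0.

Lemma ncoordG N k (a : expo N) i : G k a -> (k <= i)%N -> ncoord a i = 0.
Proof.
move=> [_ Ga] ki; rewrite /ncoord; case: insubP => [j _ ej|//].
by apply: Ga; rewrite ej.
Qed.

Lemma dot_nat N (x y : expo N) : (x *m y^T) 0 0 = \sum_(j < N) ncoord x j * ncoord y j.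
Proof. by rewrite mxE; apply: eq_bigr => j _; rewrite !ncoordE mxE. Qed.

Lemma lam_nat N (L : 'M[int]_N) (x y : expo N) :
  lam L x y = \sum_(i < N) ncoord x i * \sum_(j < N) nentry L i j * ncoord y j.
Proof.
rewrite /lam mxE.
under eq_bigr do rewrite mxE mxE big_distrl /=.
rewrite exchange_big /=; apply: eq_bigr => i _.
rewrite big_distrr /=; apply: eq_bigr => j _.
by rewrite !ncoordE nentryE mulrA.
Qed.

Lemma G0 N (a : expo N) : G 0 a -> a = 0.
Proof. by move=> [_ Ga]; apply/matrixP => i j; rewrite ord1 mxE Ga. Qed.

Lemma separate m p (B : 'M[int]_(m, m + p)) (L : 'M[int]_(m + p)) k :
  super_toric B L -> (k <= m + p)%N -> forall a0 a1 : expo (m + p),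
  G k a0 -> G k a1 -> a0 != a1 ->
  exists b cc : expo (m + p), B *m b^T = 0 /\
    (forall j : 'I_(m + p), (k <= j)%N -> cc 0 j = 0) /\
    (a0 *m b^T) 0 0 + lam L a0 cc != (a1 *m b^T) 0 0 + lam L a1 cc.
Proof.
move=> ST kN a0 a1 G0a G1a na.
have k1 : (1 <= k)%N.
  case: k kN G0a G1a => [|//] _ /G0 e0 /G0 e1; by rewrite e0 e1 eqxx in na.
have [M [dM HM]] := ST k (andb_true_intro (conj k1 kN)).
pose d : 'rV[int]_k := \row_i ncoord (a1 - a0) i.
have dn0 : d != 0.
  apply: contra na => /eqP d0; apply/eqP/matrixP => i j; rewrite ord1.
  have [ik|ki] := ltnP j k.
    have := congr1 (fun x : 'rV[int]_k => x 0 (Ordinal ik)) d0.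
    rewrite !mxE /= -(ncoordE a1 j) -(ncoordE a0 j) ncoordB; lia.
  by rewrite G0a.2 // G1a.2.
have [r Hr] : exists r, (row r M *m d^T) 0 0 != 0.
  apply/not_existsP => H; move/negP: dM; apply.
  have Md : M *m d^T = 0.
    apply/matrixP => i j; rewrite ord1 [RHS]mxE.
    by move: (H i); move/negP; rewrite negbK -row_mul mxE => /eqP.
  have := mul_adj_mx M; move/(congr1 (fun X => X *m d^T)).
  rewrite -mulmxA Md mulmx0 mul_scalar_mx => /esym /matrixP Hz.
  apply/negP => /negP ndet; move/negP: dn0; apply; apply/eqP/matrixP => i j.
  have := Hz j i; rewrite !mxE.
  by move/eqP; rewrite mulf_eq0 (negbTE ndet) => /eqP.
have [b [c [Bb Hw]]] := HM r.
pose cc : expo (m + p) := \row_j ncoord c j.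
exists b, cc; split => //; split.
  by move=> j kj; rewrite mxE /ncoord; case: insubP => [u _ eu|//]; move: (ltn_ord u); rewrite eu; lia.
have key : forall a, G k a -> (a *m b^T) 0 0 + lam L a cc =
    \sum_(i < k) ncoord a i * ncoord (row r M) i.
  move=> a Ga; rewrite dot_nat lam_nat -big_split /=.
  rewrite (@sum_widen (fun i => ncoord a i * ncoord b i + ncoord a i *
     \sum_(j < m + p) nentry L i j * ncoord cc j) k) //; last first.
    by move=> j kj; rewrite (ncoordG Ga kj) !mul0r add0r.
  apply: eq_bigr => i _; rewrite -mulrDr ncoordE Hw.
  congr (_ * (_ + _)).
  rewrite (@sum_widen (fun j => nentry L i j * ncoord cc j) k) //; last first.
    move=> j kj; rewrite /cc /ncoord; case: insubP => [u _ eu|_]; last by rewrite mulr0.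
    rewrite mxE /ncoord; case: insubP => [u' _ eu'|]; last by rewrite mulr0.
    by move: (ltn_ord u'); rewrite eu' eu; lia.
  apply: eq_bigr => j _; rewrite /cc /ncoord.
  case: insubP => [u _ eu|]; last by rewrite /= (leq_trans (ltn_ord j) kN).
  by rewrite mxE eu valK.
rewrite (key _ G0a) (key _ G1a); apply: contra Hr => /eqP e.
rewrite mxE; apply/eqP; move/eqP: e; rewrite -subr_eq0 -sumrB => /eqP e.
transitivity (- 0 : int); last by rewrite oppr0.
rewrite -[in RHS]e -sumrN; apply: eq_bigr => i _.
rewrite !mxE ncoordB ncoordE !mxE; ring.
Qed.

Lemma posp_sub z : posp z - posp (- z) = z.
Proof. rewrite /posp; lia. Qed.
Lemma posp_ge0 z : 0 <= posp z.
Proof. rewrite /posp; lia. Qed.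

Lemma ideal_scale N qh (L : 'M[int]_N) A I z f :
  is_subalg qh L A -> is_ideal qh L A I -> I f -> I (qscale z f).
Proof.
move=> HA HI If; rewrite -(qmul_const qh L).
exact: (HI.2.2.2 _ _ (HA.1 z) If).1.
Qed.

Lemma nonneg_sub N (a : expo N) j : nonneg a -> 0 < a 0 j -> nonneg (a - evec j).
Proof.
move=> nn aj i; rewrite !mxE; case: eqP => [<-|_]; last by rewrite subr0 nn.
by rewrite subr_ge0.
Qed.

Lemma isum_sub N (a : expo N) j : isum (a - evec j) = isum a - 1.
Proof.
rewrite /isum; under eq_bigr do rewrite !mxE.
rewrite big_split /= sumrN.
have -> : \sum_(i < N) (j == i)%:Z = isum (evec j) by apply: eq_bigr => i _; rewrite mxE.
by rewrite evec_sum.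
Qed.

Lemma nonneg_evec N (j : 'I_N) : nonneg (evec j).
Proof. by move=> i; rewrite mxE. Qed.

Lemma mono_notin N qh (L : 'M[int]_N) (A I : set (qfun N)) k :
  qh != 0 -> is_subalg qh L A -> (forall u, nonneg u -> A (qmono u)) ->
  is_completely_prime qh L A I ->
  (forall i : 'I_N, I (qmono (evec i)) -> (k <= i)%N) ->
  forall a, G k a -> ~ I (qmono a).
Proof.
move=> nz HA Amono [HI [IA HIp]] Hx a Ga.
suff: forall n a, G k a -> isum a = n%:Z -> ~ I (qmono a).
  move/(_ (absz (isum a)) a Ga); apply.
  by rewrite gez0_abs // /isum sumr_ge0 // => i _; apply: Ga.1.
move=> n {a Ga}; elim: n => [|n IH] a Ga sa Ia.
  move: Ia; rewrite (nonneg0 Ga.1 sa) => Ia; apply: IA.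
  apply/seteqP; split; first exact: HI.1.
  by move=> f Af; rewrite -(qmul_one qh L f); exact: (HI.2.2.2 f (qone N) Af Ia).1.
have [j aj] : exists j, a 0 j != 0.
  apply/not_existsP => H; move: sa; rewrite /isum big1 => [//|i _].
  by move: (H i); move/negP; rewrite negbK => /eqP.
have aj1 : 0 < a 0 j by rewrite lt_def aj Ga.1.
have jk : (j < k)%N.
  by rewrite ltnNge; apply/negP => kj; move: aj; rewrite Ga.2 // eqxx.
have nn' := nonneg_sub Ga.1 aj1.
have I2 : I (qmul qh L (qmono (a - evec j)) (qmono (evec j))).
  by rewrite qmono_mul subrK; apply: ideal_scale HA _ _.
case: (HIp _ _ (Amono _ nn') (Amono _ (nonneg_evec j)) I2) => [|/Hx]; last first.
  by rewrite leqNgt jk.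
apply: IH; last by rewrite isum_sub sa; lia.
split => // i ki; rewrite !mxE Ga.2 //; case: eqP => [e|_]; last by rewrite subr0.
by move: jk; rewrite e ltnNge ki.
Qed.

Lemma expz_inj (qh : CC) : qh != 0 -> (forall d, (0 < d)%N -> (qh ^+ 2) ^+ d != 1) ->
  forall x y : int, qh ^ x = qh ^ y -> x = y.
Proof.
move=> nz qnr x y e.
have e1 : qh ^ (x - y) = 1 by rewrite expfzDr // e -expfzDr // subrr.
have nq : forall n, qh ^+ n.+1 != 1.
  by move=> n; apply/eqP => h; move: (qnr n.+1 isT); rewrite exprAC h expr1n eqxx.
move: e1; case E: (x - y) => [n|n] /=.
  case: n E => [|n] E; first by move=> _; lia.
  by move/eqP; rewrite (negbTE (nq n)).
by move/eqP; rewrite invr_eq1 (negbTE (nq n)).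
Qed.

Lemma G_add N k (a b : expo N) : G k a -> G k b -> G k (a + b).
Proof.
move=> [na Ga] [nb Gb]; split; first by move=> i; rewrite mxE addr_ge0.
by move=> i ki; rewrite mxE Ga // Gb // addr0.
Qed.

Lemma mainclaim m p qh (B : 'M[int]_(m, m + p)) (L : 'M[int]_(m + p))
    (A I : set (qfun (m + p))) k :
  qh != 0 -> (forall d, (0 < d)%N -> (qh ^+ 2) ^+ d != 1) -> L^T = - L ->
  super_toric B L -> (k <= m + p)%N ->
  is_subalg qh L A -> (forall u, nonneg u -> A (qmono u)) ->
  is_ideal qh L A I -> torus_invariant B I ->
  (forall a, G k a -> ~ I (qmono a)) ->
  forall n s g, (size s <= n)%N -> I g ->
    (forall c, g c != 0 -> c \in s /\ G k c) -> g = qzero _.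
Proof.
move=> nz qnr sk ST kN HA Amono HI TI Hmono n.
elim: n => [|n IH] s g ss Ig Hg.
  apply/funext => c; apply/eqP/negPn/negP => /Hg [] + _.
  by move: ss; rewrite leqn0 => /nilP ->.
case: (pselect (exists a0, g a0 != 0)) => [[a0 ga0]|H]; last first.
  by apply/funext => c; apply/eqP/negPn/negP => gc; apply: H; exists c.
have [a0s Ga0] := Hg a0 ga0.
case: (pselect (exists a1, g a1 != 0 /\ a1 != a0)) => [[a1 [ga1 na]]|H].
  have [a1s Ga1] := Hg a1 ga1.
  have a0a1 : a0 != a1 by rewrite eq_sym.
  have [b [cc [Bb [cck wne]]]] := separate ST kN Ga0 Ga1 (a0a1 : a0 != a1).
  pose u : expo (m + p) := \row_j posp (- cc 0 j).
  pose v : expo (m + p) := \row_j posp (cc 0 j).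
  have vu : v - u = cc by apply/matrixP => i j; rewrite ord1 !mxE posp_sub.
  have nu : nonneg u by move=> i; rewrite mxE posp_ge0.
  have nv : nonneg v by move=> i; rewrite mxE posp_ge0.
  have Gu : G k u by split => // i ki; rewrite mxE cck // /posp; lia.
  have Gv : G k v by split => // i ki; rewrite mxE cck // /posp; lia.
  pose s0 := u + v.
  have Gs0 : G k s0 := G_add Gu Gv.
  pose E1 a := 2 * ((a + s0) *m b^T) 0 0 + lam L u a + lam L (a + u) v.
  pose E2 a := lam L v a + lam L (a + v) u.
  pose D0 := E1 a0 - E2 a0.
  pose h1 := toric_act b (qh ^+ 2) (qmul qh L (qmul qh L (qmono u) g) (qmono v)).
  pose h2 := qmul qh L (qmul qh L (qmono v) g) (qmono u).
  pose h := qadd h1 (qscale (- qh ^ D0) h2).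
  have hI : I h.
    apply: (HI.2.2.1).
      apply: (TI) => //; first by rewrite expf_neq0.
      apply: (HI.2.2.2 _ _ (Amono v nv) _).2; exact: (HI.2.2.2 _ _ (Amono u nu) Ig).1.
    apply: (ideal_scale _ HA HI).
    apply: (HI.2.2.2 _ _ (Amono u nu) _).2; exact: (HI.2.2.2 _ _ (Amono v nv) Ig).1.
  have hval : forall a, h (a + s0) = g a * (qh ^ E1 a - qh ^ (D0 + E2 a)).
    move=> a; rewrite /h /h1 /h2 /qadd /qscale /toric_act !qmul_monoR !qmul_monoL.
    have e1 : a + s0 - v = a + u by rewrite /s0 addrA addrK.
    have e2 : a + s0 - u = a + v by rewrite /s0 [u + v]addrC addrA addrK.
    rewrite e1 e2 !addrK.
    have ex : forall z : int, (qh ^+ 2) ^ z = qh ^ (2 * z) by move=> z; rewrite -exprz_exp.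
    rewrite ex /D0 /E1 /E2 !expfzDr //.
    move: (qh ^ (2 * ((a + s0) *m b^T) 0 0)) (qh ^ (2 * ((a0 + s0) *m b^T) 0 0)) => X1 X2.
    move: (qh ^ lam L u a) (qh ^ lam L (a + u) v) (qh ^ lam L u a0) (qh ^ lam L (a0 + u) v) => X3 X4 X5 X6.
    move: (qh ^ (- E2 a0)) (qh ^ lam L v a) (qh ^ lam L (a + v) u) (g a) => X7 X8 X9 X10.
    ring.
  pose s' := [seq y + s0 | y <- [seq y <- s | y != a0]].
  have hsupp : forall x, h x != 0 -> x \in s' /\ G k x.
    move=> x; rewrite -(subrK s0 x) hval; set a := x - s0.
    rewrite mulf_eq0 negb_or => /andP[ga fa].
    have [as_ Ga] := Hg a ga.
    split; last exact: G_add Ga Gs0.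
    apply: map_f; rewrite mem_filter as_ andbT.
    by apply: contra fa => /eqP ->; rewrite /D0 subrK subrr.
  have hdiff : forall a, E1 a - E2 a = 2 * ((a *m b^T) 0 0 + lam L a cc) +
      (2 * (s0 *m b^T) 0 0 + lam L u v - lam L v u).
    move=> a; rewrite /E1 /E2 -vu !lamDl lamDr lamNr (@lam_skew _ L a u sk) (@lam_skew _ L a v sk).
    rewrite mulmxDl mxE; ring.
  have hsz : (size s' <= n)%N.
    rewrite /s' size_map size_filter.
    have : (0 < count (predC (fun y => y != a0)) s)%N.
      by rewrite -has_count; apply/hasP; exists a0 => //=; rewrite negbK.
    have := count_predC (fun y => y != a0) s => e c0.
    rewrite -ltnS; apply: leq_trans ss; rewrite -e -[X in (X < _)%N]addn0 ltn_add2l.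
    exact: c0.
  have h0 := IH _ h hsz hI hsupp.
  move: h0 => /(congr1 (fun f => f (a1 + s0))); rewrite hval /qzero => /eqP.
  rewrite mulf_eq0 (negbTE ga1) /= subr_eq0 => /eqP /(expz_inj nz qnr) e.
  exfalso; move/negP: wne; apply; apply/eqP.
  have d1 := hdiff a1; have d0 := hdiff a0.
  rewrite /D0 in e.
  move: d1 d0 e.
  move: (E1 a1) (E2 a1) (E1 a0) (E2 a0) => x1 y1 x0 y0.
  move: ((a0 *m b^T) 0 0 + lam L a0 cc) ((a1 *m b^T) 0 0 + lam L a1 cc) => w0 w1.
  move: (2 * (s0 *m b^T) 0 0 + lam L u v - lam L v u) => K.
  clear; lia.
exfalso; apply: (Hmono a0 Ga0).
have -> : qmono a0 = qscale (g a0)^-1 g.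
  apply/funext => x; rewrite /qscale /qmono; case: (x =P a0) => [->|nx].
    by rewrite mulVf.
  have -> : g x = 0 by apply/eqP/negPn/negP => gx; apply: H; exists x; split => //; apply/eqP.
  by rewrite mulr0.
exact: ideal_scale HA HI Ig.
Qed.

Theorem mainTheorem3 (m p : nat) (qh : CC)
    (B : 'M[int]_(m, m + p)) (L : 'M[int]_(m + p)) (I : set (qfun (m + p)))
    (k : nat) :
  qh != 0 ->
  (forall d : nat, (0 < d)%N -> (qh ^+ 2) ^+ d != 1) ->
  compatible_pair B L ->
  (forall P, is_prime_ideal qh L (qcluster_alg qh B L) P ->
             is_completely_prime qh L (qcluster_alg qh B L) P) ->
  super_toric B L ->
  torus_invariant B I ->
  (exists f, I f /\ f <> qzero (m + p)) ->
  is_prime_ideal qh L (qcluster_alg qh B L) I ->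
  (k <= m + p)%N ->
  (forall i : 'I_(m + p), I (qmono (evec i)) <-> (k <= i)%N) ->
  I `&` qaffine qh L =
  ideal_gen qh L (qaffine qh L)
    [set f | exists i : 'I_(m + p), (k <= i)%N /\ f = qmono (evec i)].
Proof.
move=> nz qnr [_ [sk _]] Hprime ST TI _ Ipr kN Hx.
set A := qcluster_alg qh B L.
have HA : is_subalg qh L A := subalg_gen_is _ _ _.
have Agen : forall i, A (qmono (evec i)).
  move=> i; apply: subalg_gen_sub; exists (init_seed B L); split.
    exact: reach_refl.
  by exists i.
have Amono := mono_in_subalg nz HA Agen.
have HQ : is_subalg qh L (qaffine qh L) := subalg_gen_is _ _ _.
have Qgen : forall i, qaffine qh L (qmono (evec i)).
  by move=> i; apply: subalg_gen_sub; exists i.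
have Qmono := mono_in_subalg nz HQ Qgen.
have QA : qaffine qh L `<=` A.
  by move=> f Qf; apply: Qf => // g [i ->].
have HIcp := Hprime I Ipr.
have HI := Ipr.1.
have Hmono := mono_notin nz HA Amono HIcp (fun i => (Hx i).1).
apply/seteqP; split.
- move=> f [If Qf] J HJ HgenJ.
  have [s Hs] := qaffine_FS Qf.
  pose P1 (c : expo (m + p)) := [exists i : 'I_(m + p), (k <= i)%N && (0 < c 0 i)].
  pose f1 : qfun (m + p) := fun c => if P1 c then f c else 0.
  pose f0 : qfun (m + p) := fun c => if P1 c then 0 else f c.
  have ef : f = qadd f1 f0.
    by apply/funext => c; rewrite /qadd /f1 /f0; case: (P1 c); rewrite ?addr0 ?add0r.
  have FS1 : FS (fun a => nonneg a /\ P1 a) f1.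
    exists s => c; rewrite /f1; case: ifP => [Pc|]; last by rewrite eqxx.
    by move/Hs => [cs nc].
  have gen_in : forall (A' J' : set (qfun (m + p))), is_subalg qh L A' ->
      (forall u, nonneg u -> A' (qmono u)) -> is_ideal qh L A' J' ->
      (forall i : 'I_(m + p), (k <= i)%N -> J' (qmono (evec i))) -> J' f1.
    move=> A' J' HA' A'mono HJ' J'gen.
    apply: (FS_in (HJ'.2.1) (HJ'.2.2.1) _ _ FS1).
      by move=> z g Jg; apply: (ideal_scale _ HA' HJ').
    move=> a [na /existsP [i /andP [ki ai]]].
    rewrite (mono_factor L a (evec i) nz); apply: (ideal_scale _ HA' HJ').
    apply: (HJ'.2.2.2 _ _ (A'mono _ (nonneg_sub na ai)) (J'gen i ki)).1.
  have Jf1 : J f1.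
    by apply: (gen_in _ _ HQ Qmono HJ) => i ki; apply: HgenJ; exists i.
  have If1 : I f1.
    by apply: (gen_in _ _ HA Amono HI) => i ki; apply/(Hx i).
  have If0 : I f0.
    have -> : f0 = qadd f (qscale (-1) f1).
      apply/funext => c; rewrite /qadd /qscale /f1 /f0.
      by case: (P1 c); rewrite ?mulr0 ?addr0 // mulN1r subrr.
    by apply: (HI.2.2.1) => //; apply: (ideal_scale _ HA HI).
  have f00 : f0 = qzero _.
    apply: (mainclaim nz qnr sk ST kN HA Amono HI TI Hmono (leqnn (size s)) If0).
    move=> c; rewrite /f0; case: ifP => [|/negbT nP]; first by rewrite eqxx.
    move/Hs => [cs nc]; split => //; split => // i ki.
    apply/eqP; rewrite eq_le nc andbT leNgt; apply/negP => ci.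
    by move/negP: nP; apply; apply/existsP; exists i; rewrite ki ci.
  have -> : f = f1 by rewrite ef f00; apply/funext => c; rewrite /qadd addr0.
  exact: Jf1.
- move=> f Hf; apply: Hf.
    split; first by move=> g [].
    split.
      split; first exact: HI.2.1.
      have -> : qzero (m + p) = qconst (m + p) 0 by apply/funext => c; rewrite /qconst /qscale mul0r.
      exact: HQ.1.
    split.
      by move=> g h [Ig Qg] [Ih Qh]; split; [apply: (HI.2.2.1) | apply: (HQ.2.1)].
    move=> a g Qa [Ig Qg]; split; split.
    + exact: (HI.2.2.2 _ _ (QA _ Qa) Ig).1.
    + exact: (HQ.2.2).
    + exact: (HI.2.2.2 _ _ (QA _ Qa) Ig).2.
    + exact: (HQ.2.2).
  by move=> g [i [ki ->]]; split; [apply/(Hx i) | apply: Qgen].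
Qed.
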